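(* Let $\mathbf{Z}(\mathbf{s},t)=\{Z_1(\mathbf{s},t),\ldots,Z_p(\mathbf{s},t)\}^\top$ be a $p$-variate strictly stationary spatio-temporal random field with cross-covariance functions $C_{ij}(\mathbf{h},u)=\operatorname{cov}\{Z_i(\mathbf{s}+\mathbf{h},t+u),Z_j(\mathbf{s},t)\}$. If any two of the properties V$\mid$ST, S$\mid$VT, T$\mid$VS hold, then the remaining one also holds and the covariance is fully separable.
   Context: Separability types (each required for all $i,j\in\{1,\ldots,p\}$ and all space lags $\mathbf{h}$ and time lags $u$): V$\mid$ST: $C_{ij}(\mathbf{h},u)=\rho_1(\mathbf{h},u)C_{ij}(\mathbf{0},0)$ for some function $\rho_1$ with $\rho_1(\mathbf{0},0)=1$. S$\mid$VT: $C_{ij}(\mathbf{h},u)=\rho_2(\mathbf{h})C_{ij}(\mathbf{0},u)$ for some $\rho_2$ with $\rho_2(\mathbf{0})=1$. T$\mid$VS: $C_{ij}(\mathbf{h},u)=\rho_3(u)C_{ij}(\mathbf{h},0)$ for some $\rho_3$ with $\rho_3(0)=1$. V$\mid$S: $C_{ij}(\mathbf{h},u)=\rho_4(\mathbf{h},u)C_{ij}(\mathbf{0},u)$ for some $\rho_4$ with $\rho_4(\mathbf{0},u)=1$ for all $u$. V$\mid$T: $C_{ij}(\mathbf{h},u)=\rho_5(\mathbf{h},u)C_{ij}(\mathbf{h},0)$ for some $\rho_5$ with $\rho_5(\mathbf{h},0)=1$ for all $\mathbf{h}$. S$\mid$T: $C_{ij}(\mathbf{h},u)=\rho_{6,ij}(\mathbf{h})C_{ij}(\mathbf{0},u)$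 for some functions $\rho_{6,ij}$ with $\rho_{6,ij}(\mathbf{0})=1$. The covariance is fully separable if it satisfies all six of these separability properties. *)

(* Defs.v *)
From HB Require Import structures.
From mathcomp Require Import all_boot all_order all_algebra.
From mathcomp Require Import all_classical all_reals all_analysis.
Set Implicit Arguments. Unset Strict Implicit. Unset Printing Implicit Defensive.
Import Order.TTheory GRing.Theory Num.Theory.
Local Open Scope classical_set_scope.
Local Open Scope ring_scope.

Definition stfield d (T : measurableType d) (R : realType) (P : probability T R)
  (p sd : nat) := 'I_p -> 'rV[R]_sd -> R -> {RV P >-> R}.

(* Strict stationarity: all finite-dimensional distributions (given by their
   joint distribution functions) are invariant under space-time shifts. *)
Definition strictly_stationary d (T : measurableType d) (R : realType)
  (P : probability T R) (p sd : nat) (Z : stfield P p sd) : Prop :=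
  forall (n : nat) (ks : 'I_n -> 'I_p) (ss : 'I_n -> 'rV[R]_sd)
    (ts : 'I_n -> R) (xs : 'I_n -> R) (h : 'rV[R]_sd) (u : R),
    P [set w | forall k, Z (ks k) (ss k + h) (ts k + u) w <= xs k] =
    P [set w | forall k, Z (ks k) (ss k) (ts k) w <= xs k].

(* Finite second moments, so that covariances exist. *)
Definition second_order d (T : measurableType d) (R : realType)
  (P : probability T R) (p sd : nat) (Z : stfield P p sd) : Prop :=
  forall i s t, (Z i s t : T -> R) \in Lfun P 2%:E.

(* Cross-covariance C_ij(h,u) = cov{Z_i(s+h,t+u), Z_j(s,t)}; by stationarity
   it does not depend on (s,t), so we take (s,t) = (0,0). *)
Definition crosscov d (T : measurableType d) (R : realType)
  (P : probability T R) (p sd : nat) (Z : stfield P p sd)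
  (i j : 'I_p) (h : 'rV[R]_sd) (u : R) : R :=
  fine (covariance P (Z i h u) (Z j 0 0)).

Section Sep.
Context (R : realType) (p sd : nat).
Implicit Type C : 'I_p -> 'I_p -> 'rV[R]_sd -> R -> R.

Definition sep_V_ST C := exists rho1 : 'rV[R]_sd -> R -> R,
  rho1 0 0 = 1 /\ forall i j h u, C i j h u = rho1 h u * C i j 0 0.
Definition sep_S_VT C := exists rho2 : 'rV[R]_sd -> R,
  rho2 0 = 1 /\ forall i j h u, C i j h u = rho2 h * C i j 0 u.
Definition sep_T_VS C := exists rho3 : R -> R,
  rho3 0 = 1 /\ forall i j h u, C i j h u = rho3 u * C i j h 0.
Definition sep_V_S C := exists rho4 : 'rV[R]_sd -> R -> R,
  (forall u, rho4 0 u = 1) /\ forall i j h u, C i j h u = rho4 h u * C i j 0 u.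
Definition sep_V_T C := exists rho5 : 'rV[R]_sd -> R -> R,
  (forall h, rho5 h 0 = 1) /\ forall i j h u, C i j h u = rho5 h u * C i j h 0.
Definition sep_S_T C := exists rho6 : 'I_p -> 'I_p -> 'rV[R]_sd -> R,
  (forall i j, rho6 i j 0 = 1) /\
  forall i j h u, C i j h u = rho6 i j h * C i j 0 u.

Definition fully_separable C :=
  sep_V_ST C /\ sep_S_VT C /\ sep_T_VS C /\ sep_V_S C /\ sep_V_T C /\ sep_S_T C.
End Sep.

(* Main.v *)
Require Import Defs.
From HB Require Import structures.
From mathcomp Require Import all_boot all_order all_algebra.
From mathcomp Require Import all_classical all_reals all_analysis.
Import GRing.Theory.
Local Open Scope ring_scope.

Lemma three_sep (R : realType) (p sd : nat)
  (C : 'I_p -> 'I_p -> 'rV[R]_sd -> R -> R) :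
  (sep_V_ST C /\ sep_S_VT C) \/ (sep_V_ST C /\ sep_T_VS C) \/
  (sep_S_VT C /\ sep_T_VS C) ->
  [/\ sep_V_ST C, sep_S_VT C & sep_T_VS C].
Proof.
case=> [[[r1 [h1 e1]] [r2 [h2 e2]]]|[[[r1 [h1 e1]] [r3 [h3 e3]]]|[[r2 [h2 e2]] [r3 [h3 e3]]]]].
- split; [by exists r1|by exists r2|].
  exists (fun u => r1 0 u); split => // i j h u.
  by rewrite (e2 i j h u) (e2 i j h 0) (e1 i j 0 u) mulrCA.
- split; [by exists r1| |by exists r3].
  exists (fun h => r1 h 0); split => // i j h u.
  by rewrite (e3 i j h u) (e1 i j h 0) (e3 i j 0 u) mulrCA.
- split; [|by exists r2|by exists r3].
  exists (fun h u => r2 h * r3 u); split; first by rewrite h2 h3 mulr1.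
  by move=> i j h u; rewrite (e2 i j h u) (e3 i j 0 u) mulrA.
Qed.

Lemma full_sep (R : realType) (p sd : nat)
  (C : 'I_p -> 'I_p -> 'rV[R]_sd -> R -> R) :
  sep_V_ST C -> sep_S_VT C -> sep_T_VS C -> fully_separable C.
Proof.
move=> H1 [r2 [h2 e2]] [r3 [h3 e3]].
split => //; split; first by exists r2.
split; first by exists r3.
split; first by exists (fun h _ => r2 h).
split; first by exists (fun _ u => r3 u).
by exists (fun _ _ h => r2 h).
Qed.

Theorem proposition4 (d : measure_display) (T : measurableType d)
  (R : realType) (P : probability T R) (p sd : nat) (Z : stfield P p sd) :
  strictly_stationary Z -> second_order Z ->
  let C := crosscov Z in
  (sep_V_ST C /\ sep_S_VT C) \/ (sep_V_ST C /\ sep_T_VS C) \/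
  (sep_S_VT C /\ sep_T_VS C) ->
  [/\ sep_V_ST C, sep_S_VT C, sep_T_VS C & fully_separable C].
Proof.
move=> _ _ C H.
have [a b c] := @three_sep R p sd C H.
by split => //; apply: full_sep.
Qed.
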